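(* Let $[\pi]$ be any vincular cyclic pattern of length 3 with exactly one vinculum, i.e. $[\pi]$ is one of $[\overline{12}3],[\overline{21}3],[\overline{23}1],[\overline{32}1],[\overline{13}2],[\overline{31}2]$. Then $\left|\mathrm{Av}_n[\pi]\right|=1$ for all $n\ge 1$.
   Context: For $\sigma=\sigma_1\cdots\sigma_n\in S_n$, the cyclic permutation $[\sigma]$ is the set of all rotations $\sigma_k\cdots\sigma_n\sigma_1\cdots\sigma_{k-1}$ of $\sigma$; $[S_n]$ denotes the set of cyclic permutations of length $n$. A vincular pattern is a permutation $\pi\in S_k$ in which some pairs of adjacent positions are joined by an overline (a vinculum). A linear permutation $\tau$ contains the vincular pattern $\pi$ if $\tau$ has a subsequence order-isomorphic to $\pi$ in which, for every pair of positions of $\pi$ joined by a vinculum, the corresponding entries are adjacent in $\tau$. A cyclic permutation $[\sigma]$ contains $[\pi]$ if some rotation of $\sigma$ contains $\pi$; otherwise it avoids $[\pi]$. $\mathrm{Av}_n[\pi]$ is the set of $[\sigma]\in[S_n]$ avoiding $[\pi]$. *)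

(* Defs.v *)
From mathcomp Require Import all_boot.
Set Implicit Arguments. Unset Strict Implicit. Unset Printing Implicit Defensive.

Definition is_lperm (n : nat) (t : n.-tuple 'I_n) : bool := uniq t.

(* The cyclic permutation [t]: the set of all rotations of t. *)
Definition cyc_class (n : nat) (t : n.-tuple 'I_n) : {set n.-tuple 'I_n} :=
  [set rot_tuple k t | k : 'I_n].

Definition cyc_perms (n : nat) : {set {set n.-tuple 'I_n}} :=
  [set cyc_class t | t : n.-tuple 'I_n & is_lperm t].

(* A vincular pattern is given by a permutation p (one-line, letters 0..k-1)
   together with a list V of positions j (0-indexed) such that positions j
   and j+1 of p are joined by a vinculum. *)
Definition vcontains (w : seq nat) (p : seq nat) (V : seq nat) : bool :=
  [exists idx : (size p).-tuple 'I_(size w),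
    [&& sorted ltn (map val idx),
        [forall a : 'I_(size p), forall b : 'I_(size p),
           (nth 0 w (tnth idx a) < nth 0 w (tnth idx b)) ==
           (nth 0 p a < nth 0 p b)]
      & all (fun j => (j.+1 < size p) ==>
               (nth 0 (map val idx) j.+1 == (nth 0 (map val idx) j).+1)) V]].

Definition cyc_contains (n : nat) (C : {set n.-tuple 'I_n})
    (p V : seq nat) : bool :=
  [exists t in C, vcontains (map val t) p V].

Definition cyc_avoiders (n : nat) (p V : seq nat) : {set {set n.-tuple 'I_n}} :=
  [set C in cyc_perms n | ~~ cyc_contains C p V].

(* Main.v *)
Require Import Defs.
From mathcomp Require Import all_boot.
From mathcomp Require Import zify.
Set Implicit Arguments. Unset Strict Implicit. Unset Printing Implicit Defensive.

Lemma all_in n (t : n.-tuple 'I_n) : uniq t -> forall x, x \in t.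
Proof.
move=> ut x.
have hs : size (enum 'I_n) <= size t by rewrite size_enum_ord size_tuple.
have [_ ->] := uniq_min_size ut (fun y _ => mem_enum 'I_n y) hs.
by rewrite mem_enum.
Qed.

Lemma rot_trans (T : Type) (s : seq T) j k : j <= size s -> k <= size s ->
  exists2 m, m <= size s & rot j (rot k s) = rot m s.
Proof.
move=> hj hk; rewrite rot_add_mod //.
by case: ifP => h; [exists (j + k) | exists (j + k - size s)] => //; lia.
Qed.

Lemma cyc_classP n (t u : n.-tuple 'I_n) : 0 < n ->
  reflect (exists2 k, k <= n & val u = rot k (val t)) (u \in cyc_class t).
Proof.
move=> hn; apply: (iffP imsetP).
  by case=> k _ ->; exists k => //; apply: ltnW.
case=> k hk hu.
have [kn|kn] := ltnP k n.
  by exists (Ordinal kn) => //; apply: val_inj.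
exists (Ordinal hn) => //; apply: val_inj => /=.
rewrite hu rot0 rot_oversize // size_tuple //.
Qed.

Lemma cyc_class_eq n (t u : n.-tuple 'I_n) : 0 < n ->
  u \in cyc_class t -> cyc_class u = cyc_class t.
Proof.
move=> hn /(cyc_classP _ _ hn) [k hk hu].
apply/setP => v; apply/(cyc_classP _ _ hn)/(cyc_classP _ _ hn).
  case=> j hj ->; rewrite hu.
  have hj' : j <= size (val t) by rewrite size_tuple.
  have hk' : k <= size (val t) by rewrite size_tuple.
  have [m hm ->] := rot_trans hj' hk'.
  by exists m; rewrite // -(size_tuple t).
case=> j hj ->.
have ht : val t = rot (n - k) (val u).
  by rewrite hu -{1}(rotK k (val t)) /rotr size_rot size_tuple.
rewrite ht.
have hj' : j <= size (val u) by rewrite size_tuple.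
have hk' : n - k <= size (val u) by rewrite size_tuple leq_subr.
have [m hm ->] := rot_trans hj' hk'.
by exists m; rewrite // -(size_tuple u).
Qed.

Definition iso3 (a b c : nat) (p : seq nat) : bool :=
  [forall i : 'I_3, forall j : 'I_3,
     (nth 0 [:: a; b; c] i < nth 0 [:: a; b; c] j) == (nth 0 p i < nth 0 p j)].

Lemma iso3E a b c x y z : iso3 a b c [:: x; y; z] =
  [&& (a < b) == (x < y), (a < c) == (x < z), (b < a) == (y < x),
      (b < c) == (y < z), (c < a) == (z < x) & (c < b) == (z < y)].
Proof.
apply/idP/idP.
  move=> /forallP H.
  have F i j (hi : i < 3) (hj : j < 3) := forallP (H (Ordinal hi)) (Ordinal hj).
  by rewrite (F 0 1) // (F 0 2) // (F 1 0) // (F 1 2) // (F 2 0) // (F 2 1).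
move=> /and5P [h1 h2 h3 h4 /andP[h5 h6]].
apply/forallP => -[[|[|[|i]]] hi]; apply/forallP => -[[|[|[|j]]] hj] //=;
  by rewrite ?ltnn.
Qed.

Lemma vcontainsP (w : seq nat) x0 x1 x2 :
  reflect (exists i k, [/\ i.+1 < k, k < size w &
     iso3 (nth 0 w i) (nth 0 w i.+1) (nth 0 w k) [:: x0; x1; x2]])
    (vcontains w [:: x0; x1; x2] [:: 0]).
Proof.
apply: (iffP existsP).
  case=> idx /and3P [hs /forallP hf hv].
  case: idx hs hf hv => s hsz.
  case: s hsz => [|i0 [|i1 [|i2 [|? ?]]]] // hsz /= hs hf hv.
  have e1 : val i1 = (val i0).+1 by move: hv; rewrite andbT => /eqP.
  exists i0, i2; split; first by lia.
    exact: ltn_ord.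
  apply/forallP => a; apply/forallP => b.
  move: (hf a) => /forallP /(_ b).
  by case: a => [[|[|[|a]]] ha] //; case: b => [[|[|[|b]]] hb] //=;
    rewrite /tnth /= ?e1.
case=> i [k [h1 h2 h3]].
have hi0 : i < size w by lia.
have hi1 : i.+1 < size w by lia.
exists [tuple Ordinal hi0; Ordinal hi1; Ordinal h2].
apply/and3P; split.
- by rewrite /= h1 ltnSn.
- apply/forallP => a; apply/forallP => b.
  move: h3 => /forallP /(_ a) /forallP /(_ b).
  by case: a => [[|[|[|a]]] ha] //; case: b => [[|[|[|b]]] hb] //=.
- by rewrite /= eqxx.
Qed.

Lemma nth_rotE (s : seq nat) k i : k <= size s -> i < size s ->
  nth 0 (rot k s) i = nth 0 s (if i < size s - k then k + i else i - (size s - k)).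
Proof.
move=> hk hi; rewrite /rot nth_cat size_drop; case: ifP => h.
  by rewrite nth_drop.
rewrite nth_take //; lia.
Qed.

Lemma avoid_local n (t : n.-tuple 'I_n) x0 x1 x2 : 0 < n -> uniq t ->
  ~~ cyc_contains (cyc_class t) [:: x0; x1; x2] [:: 0] ->
  forall j c, j.+1 < n -> c < n -> c != nth 0 (map val t) j ->
  c != nth 0 (map val t) j.+1 ->
  ~~ iso3 (nth 0 (map val t) j) (nth 0 (map val t) j.+1) c [:: x0; x1; x2].
Proof.
move=> hn ut hav j c hj hc hcj hcj1; apply/negP => hiso.
move: hav => /negP; apply; apply/existsP; exists (rot_tuple j t).
apply/andP; split.
  by apply/cyc_classP => //; exists j => //; lia.
set w := map val t.
have sw : size w = n by rewrite size_map size_tuple.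
rewrite /= map_rot; apply/vcontainsP.
have cw : c \in rot j w.
  by rewrite mem_rot; apply: (map_f val (all_in ut (Ordinal hc))).
have hr0 : nth 0 (rot j w) 0 = nth 0 w j.
  by rewrite nth_rotE ?sw; [case: ifP => h; [rewrite addn0|]|lia|lia]; lia.
have hr1 : nth 0 (rot j w) 1 = nth 0 w j.+1.
  by rewrite nth_rotE ?sw; [case: ifP => h; [rewrite addn1|]|lia|lia]; lia.
have hix := nth_index 0 cw.
have hil : index c (rot j w) < size (rot j w) by rewrite index_mem.
exists 0, (index c (rot j w)); split => //.
  case: (index c (rot j w)) hix => [|[|k]] hix //.
    by rewrite -hix hr0 eqxx in hcj.
  by rewrite -hix hr1 eqxx in hcj1.
by rewrite hr0 hr1 hix.
Qed.

Lemma avoid_rot n (t : n.-tuple 'I_n) x0 x1 x2 q : 0 < n -> uniq t ->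
  ~~ cyc_contains (cyc_class t) [:: x0; x1; x2] [:: 0] -> q <= n ->
  let v := rot q (map val t) in
  [/\ (forall j, j < n -> nth 0 v j < n),
      (forall i j, i < n -> j < n -> i != j -> nth 0 v i != nth 0 v j) &
      (forall j c, j.+1 < n -> c < n -> c != nth 0 v j -> c != nth 0 v j.+1 ->
         ~~ iso3 (nth 0 v j) (nth 0 v j.+1) c [:: x0; x1; x2])].
Proof.
move=> hn ut hav hq v.
have hu : rot_tuple q t \in cyc_class t by apply/cyc_classP => //; exists q.
have e := cyc_class_eq hn hu.
have sv : size v = n by rewrite size_rot size_map size_tuple.
split.
- move=> j hj; rewrite /v -map_rot (nth_map (Ordinal hn)) ?size_rot ?size_tuple //.
  exact: ltn_ord.
- move=> i j hi hj hij; rewrite nth_uniq ?sv //.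
  by rewrite rot_uniq (map_inj_uniq val_inj).
- have := avoid_local hn (_ : uniq (rot_tuple q t)) (_ : ~~ cyc_contains (cyc_class (rot_tuple q t)) _ _).
  rewrite /= map_rot; apply; [by rewrite rot_uniq | by rewrite e].
Qed.

Lemma incr_id (v : seq nat) n :
  (forall j, j < n -> nth 0 v j < n) ->
  (forall j, j.+1 < n -> nth 0 v j < nth 0 v j.+1) ->
  forall j, j < n -> nth 0 v j = j.
Proof.
move=> bv inc.
have lo : forall j, j < n -> j <= nth 0 v j.
  elim=> [//|j IH] hj; have := IH (ltnW hj); have := inc j hj; lia.
have hi : forall d, d < n -> nth 0 v (n.-1 - d) + d <= n.-1.
  elim=> [|d IH] hd; first by have := bv n.-1; rewrite subn0; lia.
  have := IH (ltnW hd); have := inc (n.-1 - d.+1).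
  have -> : (n.-1 - d.+1).+1 = n.-1 - d by lia.
  lia.
move=> j hj; have := lo j hj; have := hi (n.-1 - j).
have -> : n.-1 - (n.-1 - j) = j by lia.
lia.
Qed.

Lemma decr_id (v : seq nat) n :
  (forall j, j < n -> nth 0 v j < n) ->
  (forall j, j.+1 < n -> nth 0 v j.+1 < nth 0 v j) ->
  forall j, j < n -> nth 0 v j = n - j.+1.
Proof.
move=> bv dec.
have lo : forall j, j < n -> nth 0 v j + j <= n.-1.
  elim=> [|j IH] hj; first by have := bv 0 hj; lia.
  have := IH (ltnW hj); have := dec j hj; lia.
have hi : forall d, d < n -> d <= nth 0 v (n.-1 - d).
  elim=> [//|d IH] hd.
  have := IH (ltnW hd); have := dec (n.-1 - d.+1).
  have -> : (n.-1 - d.+1).+1 = n.-1 - d by lia.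
  lia.
move=> j hj; have := lo j hj; have := hi (n.-1 - j).
have -> : n.-1 - (n.-1 - j) = j by lia.
lia.
Qed.

Section Cores.
Variables (v : seq nat) (n : nat).
Hypothesis bv : forall j, j < n -> nth 0 v j < n.
Hypothesis uv : forall i j, i < n -> j < n -> i != j -> nth 0 v i != nth 0 v j.

Lemma core012 :
  (forall j c, j.+1 < n -> c < n -> c != nth 0 v j -> c != nth 0 v j.+1 ->
     ~~ iso3 (nth 0 v j) (nth 0 v j.+1) c [:: 0; 1; 2]) ->
  nth 0 v 0 = n.-1 -> forall j, j < n -> nth 0 v j = n - j.+1.
Proof.
move=> loc h0; apply: decr_id => // -[|j] hj.
  have := @bv 1 hj; have := @uv 1 0 hj ltac:(lia) isT; lia.
have := loc j.+1 n.-1 hj; rewrite iso3E /=.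
have := @bv j.+1 ltac:(lia); have := @bv j.+2 hj.
have := @uv j.+1 0 ltac:(lia) ltac:(lia) isT.
have := @uv j.+2 0 hj ltac:(lia) isT.
have := @uv j.+2 j.+1 hj ltac:(lia).
rewrite h0; lia.
Qed.

Lemma core210 :
  (forall j c, j.+1 < n -> c < n -> c != nth 0 v j -> c != nth 0 v j.+1 ->
     ~~ iso3 (nth 0 v j) (nth 0 v j.+1) c [:: 2; 1; 0]) ->
  nth 0 v 0 = 0 -> forall j, j < n -> nth 0 v j = j.
Proof.
move=> loc h0; apply: incr_id => // -[|j] hj.
  have := @uv 1 0 hj ltac:(lia) isT; lia.
have := loc j.+1 0 hj; rewrite iso3E /=.
have := @uv j.+1 0 ltac:(lia) ltac:(lia) isT.
have := @uv j.+2 0 hj ltac:(lia) isT.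
have := @uv j.+2 j.+1 hj ltac:(lia).
rewrite h0; lia.
Qed.

Lemma core102 :
  (forall j c, j.+1 < n -> c < n -> c != nth 0 v j -> c != nth 0 v j.+1 ->
     ~~ iso3 (nth 0 v j) (nth 0 v j.+1) c [:: 1; 0; 2]) ->
  nth 0 v n.-1 = n.-1 -> forall j, j < n -> nth 0 v j = j.
Proof.
move=> loc h0; apply: incr_id => // j hj.
have hn1 : n.-1 < n by lia.
have := @bv j ltac:(lia); have := @bv j.+1 hj.
have := @uv j n.-1 ltac:(lia) hn1; have := @uv j.+1 n.-1 hj hn1.
have := @uv j.+1 j hj ltac:(lia).
have := loc j n.-1 hj hn1; rewrite iso3E /= h0; lia.
Qed.

Lemma core120 :
  (forall j c, j.+1 < n -> c < n -> c != nth 0 v j -> c != nth 0 v j.+1 ->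
     ~~ iso3 (nth 0 v j) (nth 0 v j.+1) c [:: 1; 2; 0]) ->
  nth 0 v n.-1 = 0 -> forall j, j < n -> nth 0 v j = n - j.+1.
Proof.
move=> loc h0; apply: decr_id => // j hj.
have hn1 : n.-1 < n by lia.
have := @bv j ltac:(lia); have := @bv j.+1 hj.
have := @uv j n.-1 ltac:(lia) hn1; have := @uv j.+1 n.-1 hj hn1.
have := @uv j.+1 j hj ltac:(lia).
have := loc j 0 hj (leq_ltn_trans (leq0n _) hj); rewrite iso3E /= h0; lia.
Qed.

Lemma core021 :
  (forall j c, j.+1 < n -> c < n -> c != nth 0 v j -> c != nth 0 v j.+1 ->
     ~~ iso3 (nth 0 v j) (nth 0 v j.+1) c [:: 0; 2; 1]) ->
  nth 0 v 0 = 0 -> forall j, j < n -> nth 0 v j = j.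
Proof.
move=> loc h0.
suff H : forall j, j < n -> forall i, i <= j -> nth 0 v i = i.
  by move=> j hj; apply: (H j hj).
elim=> [|j IH] hj i hi.
  by move: hi; rewrite leqn0 => /eqP ->.
have {}IH := IH ltac:(lia).
have [le|gt] := leqP i j; first exact: IH.
have -> : i = j.+1 by lia.
have hb := @bv j.+1 hj.
have hgt : j < nth 0 v j.+1.
  rewrite ltnNge; apply/negP => hle.
  have := IH _ hle; have := @uv j.+1 (nth 0 v j.+1) hj ltac:(lia).
  lia.
have := IH j (leqnn j).
have := loc j j.+1 hj hj; rewrite iso3E /=; lia.
Qed.

Lemma core201 :
  (forall j c, j.+1 < n -> c < n -> c != nth 0 v j -> c != nth 0 v j.+1 ->
     ~~ iso3 (nth 0 v j) (nth 0 v j.+1) c [:: 2; 0; 1]) ->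
  nth 0 v 0 = n.-1 -> forall j, j < n -> nth 0 v j = n - j.+1.
Proof.
move=> loc h0.
suff H : forall j, j < n -> forall i, i <= j -> nth 0 v i = n - i.+1.
  by move=> j hj; apply: (H j hj).
elim=> [|j IH] hj i hi.
  by move: hi; rewrite leqn0 => /eqP ->; rewrite h0; lia.
have {}IH := IH ltac:(lia).
have [le|gt] := leqP i j; first exact: IH.
have -> : i = j.+1 by lia.
have hb := @bv j.+1 hj.
have hlt : nth 0 v j.+1 < n - j.+1.
  rewrite ltnNge; apply/negP => hle.
  have hi' : n - (nth 0 v j.+1).+1 <= j by lia.
  have := IH _ hi'.
  have := @uv j.+1 (n - (nth 0 v j.+1).+1) hj ltac:(lia).
  lia.
have := IH j (leqnn j).
have := loc j (n - j.+2) hj; rewrite iso3E /=; lia.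
Qed.

End Cores.

Lemma val_inc n : map val (ord_tuple n) = iota 0 n.
Proof. exact: val_enum_ord. Qed.

Lemma val_dec n : map val (map_tuple (@rev_ord n) (ord_tuple n)) =
  map (fun x => n - x.+1) (iota 0 n).
Proof.
rewrite /= -map_comp -val_inc -map_comp.
by apply: eq_map.
Qed.

Lemma nth_inc n k i : k <= n -> i < n ->
  nth 0 (rot k (iota 0 n)) i = (if i < n - k then k + i else i - (n - k)).
Proof.
move=> hk hi; rewrite nth_rotE size_iota // nth_iota //.
case: ifP; lia.
Qed.

Lemma nth_dec n k i : k <= n -> i < n ->
  nth 0 (rot k (map (fun x => n - x.+1) (iota 0 n))) i =
  n - (if i < n - k then k + i else i - (n - k)).+1.
Proof.
move=> hk hi; rewrite -map_rot (nth_map 0) ?size_rot ?size_iota //.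
by rewrite nth_inc.
Qed.

Lemma avoid_of n (s : n.-tuple 'I_n) x0 x1 x2 : 0 < n ->
  (forall k i j, k <= n -> i.+1 < j -> j < n ->
     ~~ iso3 (nth 0 (rot k (map val s)) i) (nth 0 (rot k (map val s)) i.+1)
             (nth 0 (rot k (map val s)) j) [:: x0; x1; x2]) ->
  ~~ cyc_contains (cyc_class s) [:: x0; x1; x2] [:: 0].
Proof.
move=> hn H; apply/existsP => -[u /andP [/(cyc_classP _ _ hn) [k hk hu]]].
move=> /vcontainsP [i [j [h1 h2 h3]]].
have e : map val u = rot k (map val s) by rewrite -map_rot -hu.
move: h2 h3; rewrite e size_rot size_map size_tuple => h2 h3.
by move: (H k i j hk h1 h2); rewrite h3.
Qed.

Lemma class_eq n (t s : n.-tuple 'I_n) q : 0 < n -> q <= n ->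
  (forall j, j < n -> nth 0 (rot q (map val t)) j = nth 0 (map val s) j) ->
  cyc_class t = cyc_class s.
Proof.
move=> hn hq H.
have e : rot q (val t) = val s.
  apply: (inj_map val_inj); rewrite map_rot.
  apply: (eq_from_nth (x0 := 0)); first by rewrite size_rot !size_map !size_tuple.
  by move=> j; rewrite size_rot size_map size_tuple; apply: H.
have hs : s \in cyc_class t by apply/cyc_classP => //; exists q.
by rewrite -(cyc_class_eq hn hs).
Qed.

Lemma idx_facts n (t : n.-tuple 'I_n) e : uniq t -> e < n ->
  index e (map val t) < n /\ nth 0 (map val t) (index e (map val t)) = e.
Proof.
move=> ut he.
have hm : e \in map val t by apply: (map_f val (all_in ut (Ordinal he))).
split; last exact: nth_index.
have := hm; rewrite -index_mem size_map size_tuple //.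
Qed.

Lemma first_at n (t : n.-tuple 'I_n) e : uniq t -> e < n ->
  nth 0 (rot (index e (map val t)) (map val t)) 0 = e.
Proof.
move=> ut he; have [hi hn] := idx_facts ut he.
rewrite nth_rotE ?size_map ?size_tuple; try lia.
by case: ifP => h; [rewrite addn0 | lia].
Qed.

Lemma last_at n (t : n.-tuple 'I_n) e : uniq t -> e < n ->
  nth 0 (rot (index e (map val t)).+1 (map val t)) n.-1 = e.
Proof.
move=> ut he; have [hi hn] := idx_facts ut he.
rewrite nth_rotE ?size_map ?size_tuple; try lia.
case: ifP => h; first lia.
by have -> : n.-1 - (n - (index e (map val t)).+1) = index e (map val t) by lia.
Qed.

Lemma main_case n (s : n.-tuple 'I_n) P : uniq s ->
  ~~ cyc_contains (cyc_class s) P [:: 0] ->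
  (forall t : n.-tuple 'I_n, uniq t -> ~~ cyc_contains (cyc_class t) P [:: 0] ->
     cyc_class t = cyc_class s) ->
  #|cyc_avoiders n P [:: 0]| = 1.
Proof.
move=> us hs H.
suff -> : cyc_avoiders n P [:: 0] = [set cyc_class s] by rewrite cards1.
apply/setP => C; rewrite !inE; apply/andP/eqP.
  by case=> /imsetP [t ht ->] hav; apply: H => //; move: ht; rewrite inE.
move=> ->; split => //.
by apply/imsetP; exists s; rewrite ?inE.
Qed.

Lemma uniq_dec n : uniq (map_tuple (@rev_ord n) (ord_tuple n)).
Proof. by rewrite /= (map_inj_uniq (@rev_ord_inj n)) -[tval _]/(enum 'I_n) enum_uniq. Qed.

Lemma uniq_inc n : uniq (ord_tuple n).
Proof. by rewrite -[tval _]/(enum 'I_n) enum_uniq. Qed.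

Definition rf n k i := if i < n - k then k + i else i - (n - k).

Lemma avoid_inc n x0 x1 x2 : 0 < n ->
  (forall k i j, k <= n -> i.+1 < j -> j < n ->
     ~~ iso3 (rf n k i) (rf n k i.+1) (rf n k j) [:: x0; x1; x2]) ->
  ~~ cyc_contains (cyc_class (ord_tuple n)) [:: x0; x1; x2] [:: 0].
Proof.
move=> hn H; apply: avoid_of => // k i j hk hij hj.
rewrite val_inc !nth_inc //; try lia.
exact: H.
Qed.

Lemma avoid_dec n x0 x1 x2 : 0 < n ->
  (forall k i j, k <= n -> i.+1 < j -> j < n ->
     ~~ iso3 (n - (rf n k i).+1) (n - (rf n k i.+1).+1) (n - (rf n k j).+1)
        [:: x0; x1; x2]) ->
  ~~ cyc_contains (cyc_class (map_tuple (@rev_ord n) (ord_tuple n))) [:: x0; x1; x2] [:: 0].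
Proof.
move=> hn H; apply: avoid_of => // k i j hk hij hj.
rewrite val_dec !nth_dec //; try lia.
exact: H.
Qed.

Ltac exist_tac := move=> k i j hk hij hj; rewrite /rf iso3E /=;
  case: ifP => ?; case: ifP => ?; case: ifP => ?; lia.

Theorem theorem3p2 (p : seq nat) (n : nat) :
  perm_eq p [:: 0; 1; 2] -> 1 <= n ->
  #|cyc_avoiders n p [:: 0]| = 1.
Proof.
move=> hp hn.
have : p \in permutations [:: 0; 1; 2] by rewrite mem_permutations.
rewrite (_ : permutations [:: 0; 1; 2] = [:: [:: 1; 0; 2]; [:: 0; 1; 2]; [:: 2; 0; 1];
   [:: 0; 2; 1]; [:: 1; 2; 0]; [:: 2; 1; 0]]) //.
rewrite !inE => /or4P [/eqP->|/eqP->|/eqP->|/orP[/eqP->|/orP[/eqP->|/eqP->]]].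
-
  apply: (main_case (uniq_inc n)); first by apply: avoid_inc => //; exist_tac.
  move=> t ut hav.
  have [hq _] := idx_facts ut (ltac:(lia) : n.-1 < n).
  have [bv uv loc] := avoid_rot hn ut hav hq.
  apply: (class_eq hn hq) => j hj; rewrite val_inc nth_iota //.
  exact: (core102 bv uv loc (last_at ut (ltac:(lia) : n.-1 < n)) hj).
-
  apply: (main_case (uniq_dec n)); first by apply: avoid_dec => //; exist_tac.
  move=> t ut hav.
  have [hq _] := idx_facts ut (ltac:(lia) : n.-1 < n).
  have [bv uv loc] := avoid_rot hn ut hav (ltnW hq).
  apply: (class_eq hn (ltnW hq)) => j hj.
  rewrite val_dec (nth_map 0) ?size_iota // nth_iota //.
  exact: (core012 bv uv loc (first_at ut (ltac:(lia) : n.-1 < n)) hj).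
-
  apply: (main_case (uniq_dec n)); first by apply: avoid_dec => //; exist_tac.
  move=> t ut hav.
  have [hq _] := idx_facts ut (ltac:(lia) : n.-1 < n).
  have [bv uv loc] := avoid_rot hn ut hav (ltnW hq).
  apply: (class_eq hn (ltnW hq)) => j hj.
  rewrite val_dec (nth_map 0) ?size_iota // nth_iota //.
  exact: (core201 bv uv loc (first_at ut (ltac:(lia) : n.-1 < n)) hj).
-
  apply: (main_case (uniq_inc n)); first by apply: avoid_inc => //; exist_tac.
  move=> t ut hav.
  have [hq _] := idx_facts ut hn.
  have [bv uv loc] := avoid_rot hn ut hav (ltnW hq).
  apply: (class_eq hn (ltnW hq)) => j hj; rewrite val_inc nth_iota //.
  exact: (core021 bv uv loc (first_at ut hn) hj).
-
  apply: (main_case (uniq_dec n)); first by apply: avoid_dec => //; exist_tac.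
  move=> t ut hav.
  have [hq _] := idx_facts ut hn.
  have [bv uv loc] := avoid_rot hn ut hav hq.
  apply: (class_eq hn hq) => j hj.
  rewrite val_dec (nth_map 0) ?size_iota // nth_iota //.
  exact: (core120 bv uv loc (last_at ut hn) hj).
-
  apply: (main_case (uniq_inc n)); first by apply: avoid_inc => //; exist_tac.
  move=> t ut hav.
  have [hq _] := idx_facts ut hn.
  have [bv uv loc] := avoid_rot hn ut hav (ltnW hq).
  apply: (class_eq hn (ltnW hq)) => j hj; rewrite val_inc nth_iota //.
  exact: (core210 bv uv loc (first_at ut hn) hj).
Qed.
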